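(* Let $S_n$ be the star on $n$ vertices with edge set $E$, let $f=\{i,j\}\notin E$ be a pair of distinct vertices of $S_n$, and let $B=E\cup\{f\}$. Then the eigenvalues of $\mathfrak{D}_2(S_n)[B,B]$ are $-1$ with multiplicity $n-3$, together with the roots of the cubic polynomial $g(x)=x^3-2(n-1)x^2-7(n-2)x-(n-1)$.
   Context: For a tree $T$, let $\mathcal{V}_2$ be the set of 2-element vertex subsets (edges regarded as elements of $\mathcal{V}_2$). The 2-Steiner distance matrix $\mathfrak{D}_2(T)$ is indexed by $\mathcal{V}_2$, with entry in row $\{i,j\}$, column $\{k,l\}$ equal to the minimum number of edges of a connected subtree of $T$ whose vertex set contains $i,j,k,l$. $M[B,B]$ denotes the principal submatrix with rows and columns indexed by $B$. *)

(* Defs.v *)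
From HB Require Import structures.
From mathcomp Require Import all_boot all_order all_algebra.
Set Implicit Arguments. Unset Strict Implicit. Unset Printing Implicit Defensive.
Import Order.TTheory GRing.Theory Num.Theory.

Section Steiner.
Variables (V : finType) (adj : rel V).

Definition edges : {set {set V}} :=
  [set e : {set V} | [exists x, exists y, adj x y && (e == [set x; y])]].

Definition V2 : {set {set V}} := [set e : {set V} | #|e| == 2].

Definition is_subtree (U : {set V}) (F : {set {set V}}) : bool :=
  [&& F \subset edges,
      [forall e in F, e \subset U],
      U != set0,
      [forall x in U, forall y in U,
         connect (fun a b => [set a; b] \in F) x y]
    & #|F|.+1 == #|U| ].

(* The default value #|edges| is
   attained by the whole tree, so for trees the min is the true minimum. *)
Definition steiner (S : {set V}) : nat :=
  \big[minn/#|edges|]_(U : {set V} | S \subset U)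
    \big[minn/#|edges|]_(F : {set {set V}} | is_subtree U F) #|F|.

Definition steiner2 (e1 e2 : {set V}) : nat := steiner (e1 :|: e2).

(* The principal submatrix D_2(T)[B,B], with rows/columns indexed by B
   (enumerated by enum_val; the characteristic polynomial does not depend
   on this ordering). *)
Definition steiner2_sub (R : nzRingType) (B : {set {set V}}) : 'M[R]_#|B| :=
  \matrix_(a < #|B|, b < #|B|) ((steiner2 (enum_val a) (enum_val b))%:R)%R.

End Steiner.

Definition star_adj (n : nat) (c : 'I_n) : rel 'I_n :=
  fun x y => (x != y) && ((x == c) || (y == c)).

(* Main.v *)
Require Import Defs.
From HB Require Import structures.
From mathcomp Require Import all_boot all_order all_algebra ring.
Import Order.TTheory GRing.Theory Num.Theory.
Set Implicit Arguments. Unset Strict Implicit.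

Lemma bigmin_le (I : finType) (P : pred I) (F : I -> nat) d x :
  P x -> (\big[minn/d]_(i | P i) F i <= F x)%N.
Proof.
move=> Px; have : x \in index_enum I by rewrite mem_index_enum.
elim: (index_enum I) => // a r IH; rewrite inE big_cons => /orP [/eqP <-|xr].
  by rewrite Px geq_minl.
by case: (P a); [apply: leq_trans (geq_minr _ _) (IH xr) | exact: IH xr].
Qed.

Section Star.
Variables (n : nat) (c : 'I_n).

Lemma edges_star (e : {set 'I_n}) :
  (e \in edges (star_adj c)) = [exists x, (x != c) && (e == [set c; x])].
Proof.
rewrite inE; apply/existsP/existsP => [[x /existsP [y /andP [/andP [xy xyc] /eqP ->]]]|[x /andP [xc /eqP ->]]].
- case/orP: xyc => /eqP exc.
    by exists y; rewrite -exc eq_sym xy eqxx.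
  by exists x; rewrite -exc xy setUC eqxx.
- by exists c; apply/existsP; exists x; rewrite /star_adj eq_sym xc eqxx eqxx.
Qed.

Lemma subtree_c (U : {set 'I_n}) F x y : is_subtree (star_adj c) U F -> x \in U -> y \in U -> x != y -> c \in U.
Proof.
case/and5P => Fe FU _ Fc _ xU yU xy.
have := forallP Fc x; rewrite xU /= => /forallP /(_ y); rewrite yU /=.
case/connectP => [[|b p]] /=; first by move=> _ yx; rewrite yx eqxx in xy.
case/andP => xb _ _.
have := subsetP Fe _ xb.

rewrite (edges_star [set x; b]) => /existsP [z /andP [_ /eqP eq]].
have := forallP FU _; move/(_ [set x; b]); rewrite xb /= => /subsetP; apply.
by rewrite eq !inE eqxx.
Qed.

Lemma steiner_star (S : {set 'I_n}) : (1 < #|S|)%N -> steiner (star_adj c) S = (#|c |: S| - 1)%N.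
Proof.
move=> S2.
set U0 := c |: S.
set F0 := [set [set c; x] | x in U0 :\ c].
have cU0 : c \in U0 by rewrite setU11.
have F0e : F0 \subset edges (star_adj c).
  apply/subsetP => e /imsetP [x xU ->]; rewrite !inE in xU; case/andP: xU => xc _.
  by rewrite edges_star; apply/existsP; exists x; rewrite xc eqxx.
have cardF0 : #|F0| = (#|U0| - 1)%N.
  rewrite card_in_imset; last first.
    move=> x1 y1; rewrite !inE => /andP [x1c _] /andP [y1c _] eq.
    have : x1 \in [set c; y1] by rewrite -eq !inE eqxx orbT.
    by rewrite !inE (negbTE x1c) => /eqP.
  by rewrite (cardsD1 c U0) cU0 add1n subn1.
have sub0 : is_subtree (star_adj c) U0 F0.
  apply/and5P; split => //.
  - apply/forallP => e; apply/implyP => /imsetP [x]; rewrite !inE => /andP [_ xU] ->.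
    by apply/subsetP => z; rewrite !inE; case/orP => /eqP ->; rewrite ?eqxx ?xU.
  - by apply/eqP => h; move: cU0; rewrite h inE.
  - apply/forallP => x; apply/implyP => xU; apply/forallP => y; apply/implyP => yU.
    apply: (connect_trans (y:=c)).
      case: (eqVneq x c) => [->|xc]; first exact: connect0.
      apply: connect1 => /=; rewrite setUC; apply/imsetP; exists x => //; by rewrite in_setD1 xc xU.
    case: (eqVneq y c) => [->|yc]; first exact: connect0.
    by apply: connect1 => /=; apply/imsetP; exists y => //; rewrite in_setD1 yc yU.
  - by rewrite cardF0 subn1 prednK // (cardsD1 c) cU0.
have lb : forall (U : {set 'I_n}) F, S \subset U -> is_subtree (star_adj c) U F -> (#|U0| - 1 <= #|F|)%N.
  move=> U F SU sUF.
  have [x [y [xS yS xy]]] := card_gt1P S2.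
  have cU := @subtree_c U F x y sUF (subsetP SU _ xS) (subsetP SU _ yS) xy.
  have : U0 \subset U by rewrite subUset sub1set cU SU.
  move/subset_leq_card; case/and5P: sUF => _ _ _ _ /eqP <-.
  by rewrite leq_subLR add1n.
have le_e : (#|U0| - 1 <= #|edges (star_adj c)|)%N by rewrite -cardF0 subset_leq_card.
apply/eqP; rewrite eqn_leq; apply/andP; split.
  rewrite /steiner.
  have := @bigmin_le _ (fun U : {set 'I_n} => S \subset U) (fun U : {set 'I_n} => \big[minn/#|edges (star_adj c)|]_(F : {set {set 'I_n}} | is_subtree (star_adj c) U F) #|F|) #|edges (star_adj c)| U0 (subsetUr _ _).
  move/leq_trans; apply.
  by rewrite -cardF0; apply: (@bigmin_le _ (fun F : {set {set 'I_n}} => is_subtree (star_adj c) U0 F) _ _ F0).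
rewrite /steiner; apply: (big_ind (fun v => #|U0| - 1 <= v)%N) => //.
  by move=> a b ha hb; rewrite leq_min ha hb.
move=> U SU; apply: (big_ind (fun v => #|U0| - 1 <= v)%N) => //.
  by move=> a b ha hb; rewrite leq_min ha hb.
by move=> F; apply: lb.
Qed.

End Star.
Local Open Scope ring_scope.
Lemma sylv (R : comNzRingType) m k (a : R) (U : 'M[R]_(m,k)) (V : 'M[R]_(k,m)) :
  a ^+ k * \det (a%:M - U *m V) = a ^+ m * \det (a%:M - V *m U).
Proof.
pose W := block_mx (a%:M : 'M_m) U V (1%:M : 'M_k).
have h1 : block_mx (1%:M : 'M_m) 0 (-V) (a%:M : 'M_k) *m W
   = block_mx a%:M U 0 (a%:M - V *m U).
  rewrite /W mulmx_block !mul1mx !mul0mx !addr0 mulmx1 mulNmx mul_mx_scalar mul_scalar_mx addNr.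
  by rewrite mulNmx addrC.
have h2 : W *m block_mx (1%:M : 'M_m) 0 (-V) (1%:M : 'M_k)
   = block_mx (a%:M - U *m V) U 0 1%:M.
  by rewrite /W mulmx_block !mulmx1 !mulmx0 mulmxN !add0r mul1mx addrN.
have := congr1 determinant h1; rewrite det_mulmx det_lblock det_ublock !det_scalar expr1n mul1r.
have := congr1 determinant h2; rewrite det_mulmx det_lblock det_ublock !det_scalar !expr1n !mulr1 => ->.
by move=> ->.
Qed.
Lemma det3 (R : comNzRingType) (A : 'M[R]_3) :
  \det A = A 0 0 * (A 1 1 * A 2 2 - A 1 2 * A 2 1)
         - A 0 1 * (A 1 0 * A 2 2 - A 1 2 * A 2 0)
         + A 0 2 * (A 1 0 * A 2 1 - A 1 1 * A 2 0).
Proof.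
rewrite (expand_det_row _ 0) !big_ord_recl big_ord0 /cofactor.
rewrite !(expand_det_row _ 0) !big_ord_recl !big_ord0 /cofactor !det_mx11 !mxE /=.
pose B (x y : nat) := A (inord x) (inord y).
have hA : forall i j, A i j = B (val i) (val j) by move=> i j; rewrite /B !inord_val.
rewrite !hA /= !expr0 !expr1 /B.
ring.
Qed.

From mathcomp Require Import zify.
Section Main.
Variables (R : realFieldType) (n : nat) (c i j : 'I_n).
Hypotheses (n3 : (3 <= n)%N) (ij : i != j) (fE : [set i; j] \notin edges (star_adj c)).

Local Open Scope ring_scope.
Local Notation f := [set i; j].
Local Notation E := (edges (star_adj c)).
Local Notation B := (E :|: [set f]).

Lemma ic : i != c.
Proof.
apply/negP => /eqP e; move/negP: fE; apply; rewrite edges_star; apply/existsP; exists j.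
by rewrite -e eq_sym ij e eqxx.
Qed.

Lemma jc : j != c.
Proof.
apply/negP => /eqP e; move/negP: fE; apply; rewrite edges_star; apply/existsP; exists i.
by rewrite -e ij e setUC eqxx.
Qed.

Lemma Eset : E = [set [set c; x] | x in [set~ c]].
Proof.
apply/setP => e; rewrite edges_star; apply/existsP/imsetP => [[x /andP [xc /eqP ->]]|[x]].
  by exists x; rewrite // !inE.
by rewrite !inE => xc ->; exists x; rewrite xc eqxx.
Qed.

Lemma inB e : e \in B -> e = f \/ exists2 x, x != c & e = [set c; x].
Proof.
rewrite inE edges_star in_set1 => /orP [/existsP [x /andP [xc /eqP ->]]|/eqP ->].
  by right; exists x.
by left.
Qed.

Definition Fv (e : {set 'I_n}) : R := (c \notin e)%:R.
Definition Sv (e : {set 'I_n}) : R := ((c \in e) && (i \in e))%:R + ((c \in e) && (j \in e))%:R.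

Lemma Fv_f : Fv f = 1.
Proof. by rewrite /Fv !inE negb_or eq_sym ic eq_sym jc. Qed.
Lemma Sv_f : Sv f = 0.
Proof. by rewrite /Sv !inE (eq_sym c i) (negbTE ic) (eq_sym c j) (negbTE jc) addr0. Qed.
Lemma Fv_c x : Fv [set c; x] = 0.
Proof. by rewrite /Fv !inE eqxx. Qed.
Lemma Sv_c x : x != c -> Sv [set c; x] = (x == i)%:R + (x == j)%:R.
Proof. by move=> xc; rewrite /Sv !inE eqxx (negbTE ic) (negbTE jc) /= !(eq_sym x). Qed.

Lemma card_c x : x != c -> #|[set c; x]| = 2%N.
Proof. by move=> xc; rewrite cards2 eq_sym xc. Qed.

Lemma steiner2_E e1 e2 : e1 \in B -> steiner2 (star_adj c) e1 e2 = (#|c |: (e1 :|: e2)| - 1)%N.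
Proof.
move=> /inB h; rewrite /steiner2 steiner_star //.
apply: leq_trans (subset_leq_card (subsetUl e1 e2)).
case: h => [->|[x xc ->]]; last by rewrite card_c.
by rewrite cards2 ij.
Qed.

Ltac bool_tac := do ![case: (_ == _) => //=].

Lemma fneq x : (f == [set c; x]) = false.
Proof.
apply/negbTE/negP => /eqP e; have : c \in f by rewrite e !inE eqxx.
by rewrite !inE (eq_sym c i) (eq_sym c j) (negbTE ic) (negbTE jc).
Qed.

Lemma ceq x y : x != c -> ([set c; x] == [set c; y]) = (x == y).
Proof.
move=> xc; apply/eqP/eqP => [e|->] //.
have : x \in [set c; y] by rewrite -e !inE eqxx orbT.
by rewrite !inE (negbTE xc) => /eqP.
Qed.

Lemma entry e1 e2 : e1 \in B -> e2 \in B ->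
  (steiner2 (star_adj c) e1 e2)%:R =
  - (e1 == e2)%:R + (2 + Fv e2) + Fv e1 * (1 - Fv e2 - Sv e2) + Sv e1 * (- Fv e2) :> R.
Proof.
move=> e1B e2B; rewrite steiner2_E //.
case: (inB e1B) => [->|[x xc ->]]; case: (inB e2B) => [->|[y yc ->]].
- rewrite setUid cardsU1 cards2 ij !inE negb_or eq_sym ic eq_sym jc /= eqxx Fv_f Sv_f.
  by rewrite !addnS subn1 /=; ring.
- have -> : c |: (f :|: [set c; y]) = y |: (c |: f).
    by apply/setP => z; rewrite !inE; bool_tac.
  rewrite cardsU1 cardsU1 cards2 ij fneq Fv_f Sv_f Fv_c Sv_c // !inE (eq_sym c i) (eq_sym c j) (negbTE ic) (negbTE jc) (negbTE yc) /= !addnS subn1 /=.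
  case Hi: (y == i); case Hj: (y == j) => /=; try ring.
  by have := ij; rewrite -(eqP Hi) Hj.
- have -> : c |: ([set c; x] :|: f) = x |: (c |: f).
    by apply/setP => z; rewrite !inE; bool_tac.
  rewrite eq_sym cardsU1 cardsU1 cards2 ij fneq Fv_f Sv_f Fv_c Sv_c // !inE (eq_sym c i) (eq_sym c j) (negbTE ic) (negbTE jc) (negbTE xc) /= !addnS subn1 /=.
  case Hi: (x == i); case Hj: (x == j) => /=; try ring.
  by have := ij; rewrite -(eqP Hi) Hj.
- have -> : c |: ([set c; x] :|: [set c; y]) = c |: (x |: [set y]).
    by apply/setP => z; rewrite !inE; bool_tac.
  rewrite cardsU1 cardsU1 cards1 ceq // !Fv_c !inE (eq_sym c x) (eq_sym c y) (negbTE xc) (negbTE yc) /= !addnS subn1 /=.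
  by case: (x == y) => /=; ring.
Qed.

Lemma cardD : #|[set~ c] :\ i :\ j| = (n - 3)%N.
Proof.
have h1 := cardsD1 j ([set~ c] :\ i); have h2 := cardsD1 i [set~ c].
move: h1 h2; rewrite cardsC1 card_ord !inE eq_sym ij jc ic /=.
lia.
Qed.

Lemma sumB (phi : R -> R -> R) :
  \sum_(p < #|B|) phi (Fv (enum_val p)) (Sv (enum_val p))
  = phi 1 0 + (phi 0 1 + (phi 0 1 + phi 0 0 *+ (n - 3))).
Proof.
rewrite -(big_enum_val (fun e => phi (Fv e) (Sv e))) /=.
have -> : B = f |: [set [set c; x] | x in [set~ c]] by rewrite Eset setUC.
rewrite big_setU1 /=; last by rewrite -Eset.
rewrite big_imset /=; last first.
  by move=> x y; rewrite !inE => xc _ /eqP; rewrite ceq // => /eqP.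
rewrite (big_setD1 i) ?inE ?ic // (big_setD1 j) ?inE ?jc ?(eq_sym j) ?ij //.
rewrite Fv_f Sv_f !Fv_c !Sv_c ?ic ?jc // !eqxx (eq_sym j i) (negbTE ij) /= addr0 add0r.
congr (_ + (_ + (_ + _))).
rewrite (eq_bigr (fun=> phi 0 0)); first by rewrite sumr_const cardD.
move=> x; rewrite !inE => /andP [xj /andP [xi xc]].
by rewrite Fv_c Sv_c // (negbTE xi) (negbTE xj) addr0.
Qed.

Lemma cardB : #|B| = n.
Proof.
have -> : B = f |: [set [set c; x] | x in [set~ c]] by rewrite Eset setUC.
rewrite cardsU1 card_in_imset; last first.
  by move=> x y; rewrite !inE => xc _ /eqP; rewrite ceq // => /eqP.
rewrite -Eset fE cardsC1 card_ord; lia.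
Qed.

Definition uu (l : 'I_3) (a b : R) : R :=
  if val l == 0%N then 1 else if val l == 1%N then a else b.
Definition vv (k : 'I_3) (a b : R) : R :=
  if val k == 0%N then 2 + a else if val k == 1%N then 1 - a - b else - a.

Definition Um : 'M[R]_(#|B|, 3) := \matrix_(p, l) uu l (Fv (enum_val p)) (Sv (enum_val p)).
Definition Vm : 'M[R]_(3, #|B|) := \matrix_(k, q) vv k (Fv (enum_val q)) (Sv (enum_val q)).

Lemma M_decomp : steiner2_sub (star_adj c) R B = (-1)%:M + Um *m Vm.
Proof.
apply/matrixP => p q; rewrite !mxE !big_ord_recl big_ord0 !mxE /=.
rewrite entry ?enum_valP // (inj_eq enum_val_inj) /uu /vv /=.
by case: (p == q); rewrite /=; ring.
Qed.

Lemma VUE k l : (Vm *m Um) k l =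
  let ph := fun a b => vv k a b * uu l a b in
  ph 1 0 + (ph 0 1 + (ph 0 1 + ph 0 0 *+ (n - 3))).
Proof.
rewrite mxE /=; under eq_bigr do rewrite !mxE.
exact: (sumB (fun a b => vv k a b * uu l a b)).
Qed.

Lemma main_res : char_poly (steiner2_sub (star_adj c) R B)
  = ('X + 1) ^+ (n - 3)
    * ('X ^+ 3 - ((2 * (n - 1))%N)%:R *: 'X ^+ 2
       - ((7 * (n - 2))%N)%:R *: 'X - ((n - 1)%N)%:R%:P).
Proof.
rewrite /char_poly /char_poly_mx M_decomp map_mxD map_mxM map_scalar_mx /=.
set Up := map_mx polyC Um; set Vp := map_mx polyC Vm.
have -> : 'X%:M - ((-1)%:P%:M + Up *m Vp) = ('X + 1)%:M - Up *m Vp.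
  rewrite opprD addrA; congr (_ - _); apply/matrixP => a b; rewrite !mxE.
  by case: (a == b); rewrite /= ?mulr1n ?mulr0n ?polyCN ?polyC1 ?subr0 ?opprK.
have hs := sylv ('X + 1) Up Vp.
have nz : ('X + 1 : {poly R}) ^+ 3 != 0.
  by rewrite expf_neq0 // -polyC1 monic_neq0 // monicXaddC.
have e : ('X + 1 : {poly R}) ^+ #|B| = ('X + 1) ^+ 3 * ('X + 1) ^+ (n - 3).
  by rewrite cardB -exprD subnKC.
have hs' : ('X + 1) ^+ 3 * \det (('X + 1)%:M - Up *m Vp)
    = ('X + 1) ^+ 3 * (('X + 1) ^+ (n - 3) * \det (('X + 1)%:M - Vp *m Up)).
  by rewrite mulrA -e.
rewrite (mulfI nz hs'); congr (_ * _).
rewrite /Up /Vp -map_mxM det3.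
have ent : forall k l, (('X + 1)%:M - map_mx polyC (Vm *m Um)) k l
    = ('X + 1) *+ (k == l) - ((Vm *m Um) k l)%:P.
  by move=> k l; rewrite !mxE.
rewrite !ent !VUE /= /vv /uu /=.
rewrite !(polyCD, polyCM, polyCN, polyCMn, polyC1, polyC0) -!mul_polyC !polyC_natr.
have e1 : (n - 1 = (n - 3) + 2)%N by lia.
have e2 : (n - 2 = (n - 3) + 1)%N by lia.
rewrite e1 e2; move: (n - 3)%N => m.
rewrite !natrM !natrD.
ring.
Qed.

End Main.

Theorem theorem5p3 (R : realFieldType) (n : nat) (c i j : 'I_n) :
  (3 <= n)%N ->
  i != j ->
  [set i; j] \notin edges (star_adj c) ->
  char_poly (steiner2_sub (star_adj c) R (edges (star_adj c) :|: [set [set i; j]]))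
  = ('X + 1) ^+ (n - 3)
    * ('X ^+ 3 - ((2 * (n - 1))%N)%:R *: 'X ^+ 2
       - ((7 * (n - 2))%N)%:R *: 'X - ((n - 1)%N)%:R%:P).
Proof. by move=> n3 ij fE; apply: main_res. Qed.
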